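(* Let $N$ be a finite set with $|N|\geq 2$. An inequality $\langle o,\eta\rangle\le u$ for $\eta\in P_N$, where $o\in\mathbb{R}^{\Upsilon}$ and $u\in\mathbb{R}$, is facet-defining for $P_N$ and tight at all full graphs over $N$ (i.e. $\langle o,\eta_H\rangle=u$ for every full graph $H$) if and only if there exists an extreme standardized supermodular set function $m:\mathcal{P}(N)\to\mathbb{R}$ such that $o(a|B)=m(\{a\}\cup B)-m(B)$ for all $(a|B)\in\Upsilon$ and $u$ is the common value of $\langle o,\eta_H\rangle$ over full graphs $H$ over $N$.
   Context: $\mathrm{DAG}(N)$ is the set of acyclic directed graphs over $N$; $\mathrm{pa}_G(a)$ is the parent set of $a$ in $G$. A full graph is an acyclic directed graph over $N$ in which every pair of distinct nodes is adjacent. $\Upsilon=\{(a|B): a\in N,\ \emptyset\neq B\subseteq N\setminus\{a\}\}$; for $G\in\mathrm{DAG}(N)$, $\eta_G\in\mathbb{R}^{\Upsilon}$ has $\eta_G(a|B)=1$ if $B=\mathrm{pa}_G(a)$ and $0$ otherwise; $P_N=\mathrm{conv}\{\eta_G:G\in\mathrm{DAG}(N)\}$ is the family-variable polytope. A set function $m:\mathcal{P}(N)\to\mathbb{R}$ is standardized if $m(S)=0$ whenever $|S|\le 1$, and supermodular if $m(U)+m(V)\le m(U\cup V)+m(U\cap V)$ for all $U,V\subseteq N$. The standardized supermodular functions form a pointed polyhedral cone; $m$ is extreme if it generates an extreme ray of this cone. *)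

(* Defs.v *)
From mathcomp Require Import all_boot all_order all_algebra.
From mathcomp Require Import reals.
Set Implicit Arguments. Unset Strict Implicit. Unset Printing Implicit Defensive.
Import Order.TTheory GRing.Theory Num.Theory.
Local Open Scope ring_scope.

Section FamilyVariablePolytope.
Variables (R : realType) (N : finType).

(* A directed graph over N is given by its parent sets: G a = pa_G(a). *)
Definition graph := {ffun N -> {set N}}.

Definition gedge (G : graph) : rel N := fun x y => x \in G y.

Definition acyclic (G : graph) : bool :=
  [forall a : N, forall b : N, (b \in G a) ==> ~~ connect (gedge G) a b].

Definition full_graph (G : graph) : bool :=
  acyclic G && [forall a : N, forall b : N,
    (a != b) ==> ((a \in G b) || (b \in G a))].

Definition Ups := {p : N * {set N} | (p.2 != set0) && (p.1 \notin p.2)}.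

Definition vec := {ffun Ups -> R}.

Definition dotv (o x : vec) : R := \sum_(p : Ups) o p * x p.

Definition eta (G : graph) : vec :=
  [ffun p : Ups => ((G (val p).1 == (val p).2) : nat)%:R].

Definition PN (x : vec) : Prop :=
  exists lam : graph -> R,
    (forall G, acyclic G -> 0 <= lam G) /\
    \sum_(G : graph | acyclic G) lam G = 1 /\
    forall p, x p = \sum_(G : graph | acyclic G) lam G * eta G p.

Definition has_aff_indep (S : vec -> Prop) (k : nat) : Prop :=
  exists x : 'I_k.+1 -> vec,
    (forall i, S (x i)) /\
    forall c : 'I_k.+1 -> R,
      \sum_i c i = 0 -> (forall p, \sum_i c i * x i p = 0) -> forall i, c i = 0.

Definition aff_dim (S : vec -> Prop) (d : nat) : Prop :=
  has_aff_indep S d /\ ~ has_aff_indep S d.+1.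

Definition valid_ineq (o : vec) (u : R) : Prop := forall x, PN x -> dotv o x <= u.

Definition face_of (o : vec) (u : R) (x : vec) : Prop := PN x /\ dotv o x = u.

Definition facet_defining (o : vec) (u : R) : Prop :=
  valid_ineq o u /\ exists d, aff_dim PN d.+1 /\ aff_dim (face_of o u) d.

Definition tight_at_full (o : vec) (u : R) : Prop :=
  forall H : graph, full_graph H -> dotv o (eta H) = u.

Definition standardized (m : {set N} -> R) : Prop :=
  forall S : {set N}, (#|S| <= 1)%N -> m S = 0.

Definition supermodular (m : {set N} -> R) : Prop :=
  forall U V : {set N}, m U + m V <= m (U :|: V) + m (U :&: V).

Definition std_supmod (m : {set N} -> R) : Prop := standardized m /\ supermodular m.

Definition extreme (m : {set N} -> R) : Prop :=
  std_supmod m /\ ~ (forall S, m S = 0) /\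
  forall m1 m2 : {set N} -> R, std_supmod m1 -> std_supmod m2 ->
    (forall S, m S = m1 S + m2 S) ->
    exists t : R, 0 <= t /\ forall S, m1 S = t * m S.

End FamilyVariablePolytope.

(* Main.v *)
Require Import Defs.
From mathcomp Require Import all_boot all_order all_algebra.
From mathcomp Require Import reals.
From mathcomp Require Import zify ring lra.
From Stdlib Require Import Classical.
Import Order.TTheory GRing.Theory Num.Theory.
Local Open Scope ring_scope.
Set Implicit Arguments. Unset Strict Implicit. Unset Printing Implicit Defensive.
Section Basics.
Variables (R : realType) (N : finType).

Definition gof (o : vec R N) (a : N) (B : {set N}) : R :=
  oapp o 0 (insub (a, B) : option (Ups N)).
Definition score (o : vec R N) (G : graph N) : R := \sum_a gof o a (G a).

Lemma dotv_eta o G : dotv o (eta R G) = score o G.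
Proof.
rewrite /dotv /score (partition_big (fun p : Ups N => (val p).1) predT) //=.
apply: eq_bigr => a _.
rewrite /gof; case: insubP => [p0 _ Hp0 | Hn] /=.
- rewrite (bigD1 p0) /=; last by rewrite Hp0.
  rewrite big1 ?addr0.
  + by rewrite ffunE Hp0 /= eqxx mulr1.
  + move=> p /andP[/eqP Hp1 Hne]; rewrite ffunE Hp1.
    case: eqP => [He|]; last by rewrite mulr0.
    case/negP: Hne; apply/eqP/val_inj; rewrite Hp0.
    by move: Hp1 He; case: p => [[x B] hp] /= -> ->.
- apply: big1 => p /eqP Hp1; rewrite ffunE Hp1.
  case: eqP => [He|]; last by rewrite mulr0.
  exfalso; move/negP: Hn; apply.
  by move: Hp1 He; case: p => [[x B] hp] /= ? ?; subst.
Qed.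

Lemma acyc_irr (G : graph N) a : acyclic G -> a \notin G a.
Proof.
move/forallP/(_ a)/forallP/(_ a)/implyP => H; apply/negP => /H.
by rewrite connect0.
Qed.

Lemma acyc_edge (G : graph N) a b : acyclic G -> b \in G a -> ~~ connect (gedge G) a b.
Proof. by move/forallP/(_ a)/forallP/(_ b)/implyP. Qed.

Lemma acyc_rank (G : graph N) (r : N -> nat) :
  (forall a b, b \in G a -> (r b < r a)%N) -> acyclic G.
Proof.
move=> hr; apply/forallP => a; apply/forallP => b; apply/implyP => hb.
apply/negP => /connectP [p hp hl].
have H : forall p x, path (gedge G) x p -> (r x <= r (last x p))%N.
  elim=> [|y q IH] x //= /andP [hxy hq].
  have := IH _ hq; have := hr _ _ hxy; lia.
have := H _ _ hp; rewrite -hl; have := hr _ _ hb; lia.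
Qed.

Lemma sink (G : graph N) (S : {set N}) : acyclic G -> S != set0 ->
  exists2 a, a \in S & forall b, b \in S -> a \notin G b.
Proof.
move=> hG /set0Pn [a0 ha0].
pose anc x := #|[set y | connect (gedge G) y x]|.
case: (@arg_maxnP _ a0 (mem S) anc ha0) => a haS hmax.
exists a => // b hb; apply/negP => hab.
have : (anc a < anc b)%N.
  apply: proper_card; apply/properP; split.
    apply/subsetP => y; rewrite !inE => hy.
    by apply: (connect_trans hy); apply: connect1.
  exists b; first by rewrite inE connect0.
  by rewrite inE; apply: acyc_edge.
by have := hmax _ hb; lia.
Qed.

Definition ancestral (G : graph N) (S : {set N}) := forall a, a \in S -> G a \subset S.

Lemma sumV (m : {set N} -> R) (G : graph N) :
  m set0 = 0 -> supermodular m -> acyclic G ->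
  forall S, ancestral G S -> \sum_(a in S) (m (a |: G a) - m (G a)) <= m S.
Proof.
move=> m0 hsm hG S.
have [k Hk] : exists k, #|S| = k by eauto.
elim: k S Hk => [|k IH] S Hk HS.
  by move/eqP: Hk; rewrite cards_eq0 => /eqP ->; rewrite big_set0 m0.
have hS0 : S != set0 by rewrite -card_gt0 Hk.
have [a haS hsink] := sink hG hS0.
rewrite (big_setD1 a haS) /=.
have hGa : G a \subset S :\ a.
  apply/subsetP => x hx; rewrite !inE (subsetP (HS a haS) _ hx) andbT.
  by apply/eqP => Hxa; move: hx; rewrite Hxa (negbTE (acyc_irr a hG)).
have HS' : ancestral G (S :\ a).
  move=> x; rewrite !inE => /andP [hxa hx]; apply/subsetP => y hy.
  rewrite !inE (subsetP (HS x hx) _ hy) andbT.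
  by apply/eqP => Hya; have := hsink x hx; rewrite -Hya hy.
have Hk' : #|S :\ a| = k by move: Hk; rewrite (cardsD1 a S) haS; lia.
  have := IH (S :\ a) Hk' HS'  => IH'.
have := hsm (a |: G a) (S :\ a).
have -> : (a |: G a) :|: (S :\ a) = S.
  apply/setP => x; rewrite !inE; case: (eqVneq x a) => [->|hxa]; first by rewrite haS.
  rewrite /=; case hx: (x \in G a) => //=; by move/subsetP: hGa => /(_ x hx); rewrite !inE => /andP [].
have -> : (a |: G a) :&: (S :\ a) = G a.
  apply/setP => x; rewrite !inE; case: (eqVneq x a) => [->|hxa] /=.
    by rewrite (negbTE (acyc_irr a hG)).
  case hx: (x \in G a) => //=; by move/subsetP: hGa => /(_ x hx); rewrite !inE => /andP [].
lra.
Qed.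

Lemma sumF (m : {set N} -> R) (G : graph N) :
  m set0 = 0 -> full_graph G ->
  forall S, ancestral G S -> \sum_(a in S) (m (a |: G a) - m (G a)) = m S.
Proof.
move=> m0 /andP [hG /forallP hF] S.
have [k Hk] : exists k, #|S| = k by eauto.
elim: k S Hk => [|k IH] S Hk HS.
  by move/eqP: Hk; rewrite cards_eq0 => /eqP ->; rewrite big_set0 m0.
have hS0 : S != set0 by rewrite -card_gt0 Hk.
have [a haS hsink] := sink hG hS0.
rewrite (big_setD1 a haS) /=.
have hGa : G a = S :\ a.
  apply/setP => x; rewrite !inE; case: (eqVneq x a) => [->|hxa] /=.
    exact: (negbTE (acyc_irr a hG)).
  apply/idP/idP => [hx|hx]; first exact: (subsetP (HS a haS)).
  move/forallP: (hF x) => /(_ a); rewrite hxa /= => /orP [] //.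
  by move=> h; have := hsink x hx; rewrite h.
have HS' : ancestral G (S :\ a).
  move=> x; rewrite !inE => /andP [hxa hx]; apply/subsetP => y hy.
  rewrite !inE (subsetP (HS x hx) _ hy) andbT.
  by apply/eqP => Hya; have := hsink x hx; rewrite -Hya hy.
have Hk' : #|S :\ a| = k by move: Hk; rewrite (cardsD1 a S) haS; lia.
  rewrite (IH (S :\ a) Hk' HS').
by rewrite hGa setD1K //; lra.
Qed.

End Basics.
Section Ranks.
Variables (R : realType) (N : finType).

Definition rk (b : N -> nat) (x : N) : nat := (b x * #|N| + enum_rank x)%N.
Definition FG (r : N -> nat) : graph N := [ffun a => [set y | (r y < r a)%N]].

Lemma rk_lt b x y : (rk b x < rk b y)%N =
  (b x < b y)%N || ((b x == b y) && (enum_rank x < enum_rank y)%N).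
Proof.
rewrite /rk; have hx := ltn_ord (enum_rank x); have hy := ltn_ord (enum_rank y).
move: (b x) (b y) (nat_of_ord (enum_rank x)) (nat_of_ord (enum_rank y)) hx hy.
move: #|N| => M bx by' ex ey hx hy.
case: (ltngtP bx by') => h /=.
- apply/idP; have : (bx.+1 * M <= by' * M)%N by rewrite leq_mul2r h orbT.
  rewrite mulSn; lia.
- apply/negbTE; rewrite -leqNgt.
  have : (by'.+1 * M <= bx * M)%N by rewrite leq_mul2r h orbT.
  rewrite mulSn; lia.
- by subst; rewrite ltn_add2l.
Qed.

Lemma rk_inj b : injective (rk b).
Proof.
move=> x y H; apply: enum_rank_inj; apply: val_inj => /=.
have := congr1 (modn^~ #|N|) H; rewrite /rk !modnMDl !modn_small //.
Qed.

Lemma FG_full b : full_graph (FG (rk b)).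
Proof.
apply/andP; split.
  by apply: (acyc_rank (r := rk b)) => a c; rewrite ffunE inE.
apply/forallP => a; apply/forallP => c; apply/implyP => hac.
rewrite !ffunE !inE; case: (ltngtP (rk b a) (rk b c)) => //= h.
by move: hac; rewrite (rk_inj h) eqxx.
Qed.

Lemma FG_anc b (S : {set N}) : (forall x y, x \in S -> y \notin S -> (b x < b y)%N) ->
  ancestral (FG (rk b)) S.
Proof.
move=> h a ha; apply/subsetP => y; rewrite ffunE inE => hy.
apply/negPn/negP => hyS; have := h _ _ ha hyS.
by move: hy; rewrite rk_lt => /orP [h1|/andP [/eqP h1 _]]; lia.
Qed.

Definition omod (m : {set N} -> R) (o : vec R N) :=
  forall p : Ups N, o p = m ((val p).1 |: (val p).2) - m (val p).2.

Lemma std0 (m : {set N} -> R) : standardized m -> m set0 = 0.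
Proof. by move=> hs; apply: hs; rewrite cards0. Qed.

Lemma gof_m m o a (B : {set N}) : standardized m -> omod m o -> a \notin B ->
  gof o a B = m (a |: B) - m B.
Proof.
move=> hs ho haB; rewrite /gof; case: insubP => [p _ Hp | Hn] /=.
  by rewrite ho Hp.
have HB : B = set0 by apply/eqP; move: Hn; rewrite /= haB andbT negbK.
by rewrite HB setU0 (hs [set a]) ?cards1 // (std0 hs) subr0.
Qed.

Lemma score_m m o G : standardized m -> omod m o -> acyclic G ->
  score o G = \sum_a (m (a |: G a) - m (G a)).
Proof.
by move=> hs ho hG; apply: eq_bigr => a _; rewrite (gof_m hs ho (acyc_irr a hG)).
Qed.

Lemma anc_setT (G : graph N) : ancestral G setT.
Proof. by move=> a _; apply: subsetT. Qed.

Lemma valid_m m o G : standardized m -> supermodular m -> omod m o -> acyclic G ->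
  score o G <= m setT.
Proof.
move=> hs hsm ho hG; rewrite (score_m hs ho hG).
have := sumV (std0 hs) hsm hG (anc_setT G).
by rewrite (eq_bigl predT) // => x; rewrite inE.
Qed.

Lemma full_m m o G : standardized m -> omod m o -> full_graph G ->
  score o G = m setT.
Proof.
move=> hs ho hG; have hG' : acyclic G by case/andP: hG.
rewrite (score_m hs ho hG').
have := sumF (std0 hs) hG (anc_setT G).
by rewrite (eq_bigl predT) // => x; rewrite inE.
Qed.

Lemma init_m m o b (S : {set N}) : standardized m -> omod m o ->
  (forall x y, x \in S -> y \notin S -> (b x < b y)%N) ->
  \sum_(x in S) gof o x (FG (rk b) x) = m S.
Proof.
move=> hs ho hb.
have hG : acyclic (FG (rk b)) by case/andP: (FG_full b).
rewrite -(sumF (std0 hs) (FG_full b) (FG_anc hb)).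
by apply: eq_bigr => x _; rewrite (gof_m hs ho (acyc_irr x hG)).
Qed.

Lemma initI (o : vec R N) (u : R) : tight_at_full o u ->
  forall (S : {set N}) b1 b2,
   (forall x y, x \in S -> y \notin S -> (b1 x < b1 y)%N) ->
   (forall x y, x \in S -> y \notin S -> (b2 x < b2 y)%N) ->
   \sum_(x in S) gof o x (FG (rk b1) x) = \sum_(x in S) gof o x (FG (rk b2) x).
Proof.
move=> ht S b1 b2 h1 h2.
pose K := (\sum_x b1 x).+1.
pose b3 x := if x \in S then b1 x else (b2 x + K)%N.
have hK : forall x, (b1 x < K)%N.
  by move=> x; rewrite ltnS (bigD1 x) //= leq_addr.
have E1 : forall x, x \in S -> FG (rk b3) x = FG (rk b1) x.
  move=> x hx; apply/setP => y; rewrite !ffunE !inE !rk_lt /b3 hx.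
  case hy: (y \in S) => //.
  have := h1 _ _ hx (negbT hy); have := hK x => hk1 hk2.
  have -> : (b2 y + K < b1 x)%N = false by apply/negbTE; rewrite -leqNgt; lia.
  have -> : (b2 y + K == b1 x) = false by apply/negbTE; lia.
  have -> : (b1 y < b1 x)%N = false by apply/negbTE; rewrite -leqNgt; lia.
  have -> : (b1 y == b1 x) = false by apply/negbTE; lia.
  done.
have E2 : forall x, x \notin S -> FG (rk b3) x = FG (rk b2) x.
  move=> x hx; apply/setP => y; rewrite !ffunE !inE !rk_lt /b3 (negbTE hx).
  case hy: (y \in S).
    have := h2 _ _ hy hx; have := hK y => hk1 hk2.
    have -> : (b1 y < b2 x + K)%N by lia.
    by rewrite hk2.
  by rewrite ltn_add2r eqn_add2r.
have T3 := ht _ (FG_full b3); have T2 := ht _ (FG_full b2).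
rewrite !dotv_eta /score in T3 T2.
rewrite (bigID (mem S)) /= in T3; rewrite (bigID (mem S)) /= in T2.
have e1 : \sum_(x | x \in S) gof o x (FG (rk b3) x) = \sum_(x in S) gof o x (FG (rk b1) x).
  by apply: eq_bigr => x hx; rewrite E1.
have e2 : \sum_(x | x \notin S) gof o x (FG (rk b3) x) = \sum_(x | x \notin S) gof o x (FG (rk b2) x).
  by apply: eq_bigr => x hx; rewrite E2.
rewrite e1 e2 in T3; lra.
Qed.

Definition bS (S : {set N}) (x : N) : nat := (x \notin S).
Definition mA (o : vec R N) (S : {set N}) : R :=
  \sum_(x in S) gof o x (FG (rk (bS S)) x).

Lemma bS_init (S : {set N}) x y : x \in S -> y \notin S -> (bS S x < bS S y)%N.
Proof. by rewrite /bS => -> ->. Qed.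

Lemma mA_std o : standardized (mA o).
Proof.
move=> S; rewrite leq_eqVlt ltnS leqn0 => /orP [/cards1P [x ->]| ].
  rewrite /mA big_set1.
  have -> : FG (rk (bS [set x])) x = set0.
    apply/setP => y; rewrite !ffunE !inE rk_lt /bS !inE.
    by case: (eqVneq y x) => [->|hyx]; rewrite ?eqxx ?(negbTE hyx) /= ?ltnn ?andbF.
  by rewrite /gof insubF //= eqxx.
by rewrite cards_eq0 => /eqP ->; rewrite /mA big_set0.
Qed.

Lemma mA_omod o u : tight_at_full o u -> omod (mA o) o.
Proof.
move=> ht [[a B] hp] /=.
have haB : a \notin B by case/andP: hp.
pose bK x := if x \in B then 0%N else if x == a then 1%N else 2%N.
have i1 : forall x y, x \in a |: B -> y \notin a |: B -> (bK x < bK y)%N.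
  move=> x y; rewrite /bK !inE => hx; rewrite negb_or => /andP [hya hyB].
  rewrite (negbTE hya) (negbTE hyB); case hxB: (x \in B) => //; by move: hx; rewrite hxB orbF => ->.
have i2 : forall x y, x \in B -> y \notin B -> (bK x < bK y)%N.
  move=> x y; rewrite /bK => -> /negbTE ->; by case: (y == a).
rewrite /mA (initI ht (bS_init (S := a |: B)) i1) (initI ht (bS_init (S := B)) i2).
rewrite big_setU1 //=.
have -> : FG (rk bK) a = B.
  apply/setP => y; rewrite !ffunE !inE rk_lt /bK (negbTE haB) eqxx.
  case hy: (y \in B) => //=.
  by case: (eqVneq y a) => [->|] //=; rewrite ltnn.
have -> : gof o a B = o (exist _ (a, B) hp).
  by rewrite /gof (valK (exist _ (a, B) hp : Ups N)).
lra.
Qed.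

Lemma valid_of (o : vec R N) (u : R) :
  (forall G, acyclic G -> dotv o (eta R G) <= u) -> valid_ineq o u.
Proof.
move=> h x [lam [hl0 [hl1 hx]]].
rewrite /dotv (eq_bigr (fun p => \sum_(G | acyclic G) o p * (lam G * eta R G p))); last first.
  by move=> p _; rewrite hx mulr_sumr.
rewrite exchange_big /=.
apply: (le_trans (y := \sum_(G | acyclic G) lam G * u)).
  apply: ler_sum => G hG.
  have -> : \sum_i o i * (lam G * eta R G i) = lam G * dotv o (eta R G).
    rewrite /dotv mulr_sumr; apply: eq_bigr => p _; ring.
  by apply: ler_wpM2l; [exact: hl0| exact: h].
by rewrite -mulr_suml hl1 mul1r.
Qed.

End Ranks.
Ltac bcase U V x y :=
  rewrite ?inE; case: (x \in U); case: (x \in V); case: (y \in U); case: (y \in V).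

Section UV.
Variables (R : realType) (N : finType).

Definition bUV (U V : {set N}) (x : N) : nat :=
  (if x \in U then (if x \in V then 0 else 1) else if x \in V then 2 else 3)%N.
Definition bUV' (U V : {set N}) (x : N) : nat :=
  (if x \in U then (if x \in V then 0 else 2) else if x \in V then 1 else 3)%N.
Definition GUV (U V : {set N}) : graph N :=
  [ffun x => if x \in V :\: U then FG (rk (bUV U V)) x :&: V else FG (rk (bUV U V)) x].

Lemma GUV_acyc U V : acyclic (GUV U V).
Proof.
apply: (acyc_rank (r := rk (bUV U V))) => a c; rewrite ffunE.
by case: (a \in V :\: U); rewrite ?inE ?ffunE ?inE // => /andP [].
Qed.

Lemma sum_split (F : N -> R) (A B : {set N}) : A \subset B ->
  \sum_(x in B) F x = \sum_(x in A) F x + \sum_(x in B :\: A) F x.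
Proof.
move=> hAB; rewrite (big_setID A) /=; congr (_ + _).
by apply: eq_bigl => x; rewrite !inE; case hx: (x \in A); rewrite ?andbF ?andbT ?(subsetP hAB _ hx).
Qed.

Lemma GUV_score (m : {set N} -> R) (o : vec R N) U V : standardized m -> omod m o ->
  score o (GUV U V) = m setT + m U + m V - m (U :|: V) - m (U :&: V).
Proof.
move=> hs ho.
set f := fun x => gof o x (FG (rk (bUV U V)) x).
set f' := fun x => gof o x (FG (rk (bUV' U V)) x).
have e1 : \sum_(x | x \in V :\: U) gof o x (GUV U V x) = \sum_(x in V :\: U) f' x.
  apply: eq_bigr => x hx; rewrite /f' ffunE hx; congr (gof o x _).
  move: hx; rewrite inE => /andP [hxU hxV].
  apply/setP => y; rewrite !ffunE !inE !rk_lt /bUV /bUV' (negbTE hxU) hxV.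
  by case: (y \in U); case: (y \in V); rewrite /= ?andbT ?andbF ?eqxx ?ltnn.
have e2 : \sum_(x | x \notin V :\: U) gof o x (GUV U V x) = \sum_(x | x \notin V :\: U) f x.
  by apply: eq_bigr => x hx; rewrite /f ffunE (negbTE hx).
rewrite /score (bigID (mem (V :\: U))) /= e1 e2.
have t1 : \sum_(x in setT) f x = m setT.
  by apply: init_m => // x y _; rewrite inE.
have t2 : \sum_(x in U :|: V) f x = m (U :|: V).
  by apply: init_m => // x y; rewrite /bUV /bUV'; bcase U V x y.
have t3 : \sum_(x in U) f x = m U.
  by apply: init_m => // x y; rewrite /bUV /bUV'; bcase U V x y.
have t4 : \sum_(x in V) f' x = m V.
  by apply: init_m => // x y; rewrite /bUV /bUV'; bcase U V x y.
have t5 : \sum_(x in U :&: V) f' x = m (U :&: V).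
  by apply: init_m => // x y; rewrite /bUV /bUV'; bcase U V x y.
have s1 := sum_split f (subsetUl U V).
have s2 := sum_split f' (subsetIr U V).
have d1 : (U :|: V) :\: U = V :\: U.
  by apply/setP => x; rewrite !inE; case: (x \in U); case: (x \in V); rewrite ?andbT ?andbF ?orbT ?orbF.
have d2 : V :\: (U :&: V) = V :\: U.
  by apply/setP => x; rewrite !inE; case: (x \in U); case: (x \in V); rewrite ?andbT ?andbF ?orbT ?orbF.
rewrite d1 in s1; rewrite d2 in s2.
have s0 : \sum_(x in setT) f x = \sum_(x | x \in V :\: U) f x + \sum_(x | x \notin V :\: U) f x.
  by rewrite (bigID (mem (V :\: U))) /=; congr (_ + _); apply: eq_bigl => x; rewrite inE.
lra.
Qed.

End UV.
Section Lin.
Variables (R : realType) (N : finType).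

Lemma supmod_nonneg (m : {set N} -> R) : std_supmod m -> forall S, 0 <= m S.
Proof.
move=> [hs hsm] S.
have [k Hk] : exists k, #|S| = k by eauto.
elim: k S Hk => [|k IH] S Hk.
  by rewrite hs // Hk.
have : S != set0 by rewrite -card_gt0 Hk.
case/set0Pn => a ha.
have := IH (S :\ a); rewrite (cardsD1 a S) ha in Hk.
have Hk' : #|S :\ a| = k by move: Hk; rewrite add1n => -[].
move=> /(_ Hk') h1.
have := hsm (S :\ a) [set a].
rewrite setUC setD1K // (hs [set a]) ?cards1 //.
have -> : (S :\ a) :&: [set a] = set0.
  by apply/setP => x; rewrite !inE; case: (x == a); rewrite ?andbF ?andbT.
rewrite (std0 hs); lra.
Qed.

Lemma supmod_leT (m : {set N} -> R) : std_supmod m -> forall S, m S <= m setT.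
Proof.
move=> hm S; have := supmod_nonneg hm (~: S); have := hm.2 S (~: S).
by rewrite setUCr setICr (std0 hm.1); lra.
Qed.

Lemma supmod_T0 (m : {set N} -> R) : std_supmod m -> m setT = 0 -> forall S, m S = 0.
Proof.
move=> hm h0 S; have := supmod_nonneg hm S; have := supmod_leT hm S; lra.
Qed.

Lemma dep (C : finType) (k : nat) (f : 'I_k -> C -> R) : (#|C| < k)%N ->
  exists v : 'I_k -> R, (exists i, v i != 0) /\ forall c, \sum_i v i * f i c = 0.
Proof.
move=> hk.
pose A := \matrix_(i < k, j < #|C|) f i (enum_val j).
have hA : ~~ row_free A.
  rewrite /row_free; apply/negP => /eqP hr; have := rank_leq_col A; lia.
move: hA; rewrite -kermx_eq0 => /matrix0Pn [i [j hij]].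
pose w := row i (kermx A).
have hw : w *m A = 0 by apply/sub_kermxP; apply: row_sub.
exists (fun l => w 0 l); split.
  by exists j; rewrite /w mxE.
move=> c; have := congr1 (fun M : 'rV[R]_#|C| => M 0 (enum_rank c : 'I_#|C|)) hw.
rewrite !mxE => h; rewrite -[RHS]h; apply: eq_bigr => l _; rewrite /A !mxE; congr (_ * f _ _); exact (esym (@enum_rankK C c)).
Qed.

Lemma PN_eta (G : graph N) : acyclic G -> PN (eta R G).
Proof.
move=> hG; exists (fun H => ((H == G) : nat)%:R); split.
  by move=> H _; case: (H == G).
split.
  rewrite (bigD1 G) //= eqxx big1 ?addr0 // => H /andP [_ /negbTE ->] //.
move=> p; rewrite (bigD1 G) //= eqxx mul1r big1 ?addr0 // => H /andP [_ /negbTE ->].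
by rewrite mul0r.
Qed.

Lemma aff_mono (S S' : vec R N -> Prop) k : (forall x, S x -> S' x) ->
  has_aff_indep S k -> has_aff_indep S' k.
Proof. by move=> h [x [hx hi]]; exists x; split => // i; apply: h. Qed.

Lemma span_lemma (n : nat) (col : 'I_n -> Ups N) (coli : Ups N -> 'I_n)
  (c1 : cancel col coli) (c2 : cancel coli col) (T : pred (graph N)) :
  (forall w : vec R N, (forall G, T G -> dotv w (eta R G) = 0) -> forall p, w p = 0) ->
  exists x : 'I_n -> graph N, (forall i, T (x i)) /\
    forall c : 'I_n -> R, (forall p, \sum_i c i * eta R (x i) p = 0) -> forall i, c i = 0.
Proof.
move=> hT.
pose A := \matrix_(i < #|graph N|, j < n) ((T (enum_val i) : nat)%:R * eta R (enum_val i) (col j)).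
have hre : forall F : Ups N -> R, \sum_p F p = \sum_j F (col j).
  by move=> F; rewrite (reindex col) //; apply: onW_bij; exists coli.
have hfull : row_full A.
  rewrite /row_full -mxrank_tr; apply: inj_row_free => v hv.
  pose w : vec R N := [ffun p => v 0 (coli p)].
  have hw : forall p, w p = 0.
    apply: hT => G hG; have := congr1 (fun M : 'rV[R]_#|graph N| => M 0 (enum_rank G : 'I_#|graph N|)) hv.
    rewrite !mxE /dotv hre => h; rewrite -[RHS]h; apply: eq_bigr => j _.
    rewrite /A !mxE ffunE c1.
    have -> : enum_val (enum_rank G : 'I_#|graph N|) = G by exact (@enum_rankK _ G).
    by rewrite hG mul1r mulrC.
  apply/rowP => j; rewrite !mxE -(c1 j).
  by have := hw (col j); rewrite ffunE.
set frf := fullrankfun hfull.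
have hfree := fullrowsub_free hfull.
have hinj : forall v : 'rV_n, v *m rowsub frf A = 0 -> v = 0.
  by move=> v /eqP; rewrite (mulmx_free_eq0 _ hfree) => /eqP.
have hTx : forall i, T (enum_val (frf i)).
  move=> i; apply/negPn/negP => hTi.
  have := hinj (delta_mx 0 i); rewrite -rowE.
  have -> : row i (rowsub frf A) = 0.
    by apply/rowP => j; rewrite !mxE (negbTE hTi) mul0r.
  move=> /(_ erefl) /matrixP /(_ 0 i); rewrite !mxE !eqxx /= => /eqP.
  by rewrite oner_eq0.
exists (fun i => enum_val (frf i)); split => //.
move=> c hc i.
have := hinj (\row_l c l).
have -> : \row_l c l *m rowsub frf A = 0.
  apply/rowP => j; rewrite [LHS]mxE [RHS]mxE -[RHS](hc (col j)); apply: eq_bigr => l _.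
  by rewrite !mxE hTx mul1r.
by move=> /(_ erefl) /rowP /(_ i); rewrite !mxE.
Qed.

End Lin.
Section Pert.
Variables (R : realType) (N : finType).

Definition sUV (m : {set N} -> R) U V := m (U :|: V) + m (U :&: V) - m U - m V.

Lemma extreme_T (m : {set N} -> R) : extreme m -> m setT != 0.
Proof.
move=> [hm [hnz _]]; apply/eqP => h0; apply: hnz; exact: supmod_T0.
Qed.

Lemma pert (m : {set N} -> R) (o : vec R N) : extreme m -> omod m o ->
  forall w : vec R N,
  (forall G, acyclic G && (dotv o (eta R G) == m setT) -> dotv w (eta R G) = 0) ->
  forall p, w p = 0.
Proof.
move=> hex ho w hw; have hmT := extreme_T hex.
move: hex => [[hs hsm] [hnz hext]].
have hT : forall G, full_graph G -> acyclic G && (dotv o (eta R G) == m setT).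
  move=> G hG; rewrite dotv_eta (full_m hs ho hG) eqxx andbT; by case/andP: hG.
have ht' : tight_at_full w 0 by move=> H hH; apply: hw; apply: hT.
set m' := mA w.
have hs' : standardized m' := mA_std w.
have ho' : omod m' w := mA_omod ht'.
have hT0 : m' setT = 0.
  have := ht' _ (FG_full (fun _ => 0%N)).
  by rewrite dotv_eta (full_m hs' ho' (FG_full _)).
have hkey : forall U V, sUV m U V = 0 -> sUV m' U V = 0.
  move=> U V h0.
  have hG := GUV_acyc U V.
  have h1 : acyclic (GUV U V) && (dotv o (eta R (GUV U V)) == m setT).
    rewrite hG dotv_eta (GUV_score _ _ hs ho); apply/eqP; move: h0; rewrite /sUV; lra.
  have := hw _ h1; rewrite dotv_eta (GUV_score _ _ hs' ho') hT0; rewrite /sUV; lra.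
have hs0 : forall U V, 0 <= sUV m U V by move=> U V; have := hsm U V; rewrite /sUV; lra.
pose K := \sum_(UV : {set N} * {set N}) `|sUV m' UV.1 UV.2| / sUV m UV.1 UV.2.
have hK0 : 0 <= K.
  by apply: sumr_ge0 => UV _; apply: divr_ge0 => //; apply: normr_ge0.
pose e := (K + 1)^-1.
have he : 0 < e by rewrite invr_gt0; lra.
have hbound : forall U V, `|e * sUV m' U V| <= sUV m U V.
  move=> U V; rewrite normrM (gtr0_norm he).
  have [h0|hpos] := eqVneq (sUV m U V) 0.
    by rewrite h0 (hkey _ _ h0) normr0 mulr0.
  have hpos' : 0 < sUV m U V by rewrite lt_def hpos hs0.
  have hle : `|sUV m' U V| / sUV m U V <= K.
    rewrite /K (bigD1 (U, V)) //= lerDl.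
    by apply: sumr_ge0 => UV _; apply: divr_ge0 => //; apply: normr_ge0.
  move: hle; rewrite ler_pdivrMr // => hle.
  have -> : sUV m U V = e * ((K + 1) * sUV m U V) by rewrite mulrA mulVf ?mul1r //; lra.
  apply: ler_wpM2l; first exact: ltW.
  have := normr_ge0 (sUV m' U V); nra.
pose m1 := fun S => (m S + e * m' S) / 2.
pose m2 := fun S => (m S - e * m' S) / 2.
have hsm12 : forall U V, - sUV m U V <= e * sUV m' U V <= sUV m U V.
  by move=> U V; rewrite -ler_norml; apply: hbound.
have std1 : std_supmod m1.
  split.
    by move=> S hS; rewrite /m1 hs // hs' // mulr0 addr0 mul0r.
  move=> U V; have /andP [h _] := hsm12 U V; move: h.
  rewrite /m1 /sUV !mulrBr !mulrDr; lra.
have std2 : std_supmod m2.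
  split.
    by move=> S hS; rewrite /m2 hs // hs' // mulr0 subr0 mul0r.
  move=> U V; have /andP [_ h] := hsm12 U V; move: h.
  rewrite /m2 /sUV !mulrBr !mulrDr; lra.
have hsplit : forall S, m S = m1 S + m2 S by move=> S; rewrite /m1 /m2; lra.
have [t [_ ht]] := hext m1 m2 std1 std2 hsplit.
have htT := ht setT; rewrite /m1 hT0 mulr0 addr0 in htT.
have ht2 : t = 2^-1.
  apply: (mulIf hmT); move: htT; rewrite mulrC => ->; by rewrite mulrC.
have hm0 : forall S, m' S = 0.
  move=> S; have := ht S; rewrite /m1 ht2 => h.
  have : e * m' S = 0 by move: h; lra.
  by move/eqP; rewrite mulf_eq0 (gt_eqF he) /= => /eqP.
by move=> p; rewrite ho' !hm0 subr0.
Qed.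

End Pert.
Section RHS.
Variables (R : realType) (N : finType).

Definition G0 : graph N := [ffun _ => set0].
Definition eU (p : Ups N) : graph N := [ffun x => if x == (val p).1 then (val p).2 else set0].

Lemma G0_acyc : acyclic G0.
Proof. by apply: (acyc_rank (r := fun _ => 0%N)) => a b; rewrite ffunE inE. Qed.

Lemma eta_G0 p : eta R G0 p = 0.
Proof.
rewrite !ffunE; case: p => [[a B] hp] /=; move: hp => /andP [hB _].
by rewrite eq_sym (negbTE hB).
Qed.

Lemma eU_acyc p : acyclic (eU p).
Proof.
apply: (acyc_rank (r := fun x => nat_of_bool (x == (val p).1))) => a b.
rewrite ffunE; case: ifP => [_|]; last by rewrite inE.
case: p => [[a' B] hp] /= hb; move: hp => /andP [_ hn].
by case: (eqVneq b a') hb => [->|] //; rewrite (negbTE hn).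
Qed.

Lemma eta_eU p q : eta R (eU p) q = ((q == p) : nat)%:R.
Proof.
rewrite !ffunE; congr ((nat_of_bool _)%:R).
case: q p => [[a B] hq] [[a' B'] hp] /=.
case: (eqVneq a a') => [e|h].
  subst a'; apply/eqP/eqP => [e|e].
    by apply: val_inj; rewrite /= e.
  by have := congr1 (fun z => (val z).2) e => /= ->.
have /andP [hB _] := hq; rewrite eq_sym (negbTE hB).
apply/esym/negbTE/eqP => e; move: (congr1 (fun z => (val z).1) e) => /= e'.
by move: h; rewrite e' eqxx.
Qed.

Definition ptsPN n (col : 'I_n -> Ups N) (i : 'I_n.+1) : vec R N :=
  if unlift ord0 i is Some j then eta R (eU (col j)) else eta R G0.

Lemma indepPN n (col : 'I_n -> Ups N) (coli : Ups N -> 'I_n) :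
  cancel col coli -> cancel coli col -> has_aff_indep (@PN R N) n.
Proof.
move=> c1 c2; exists (ptsPN col); split.
  move=> i; rewrite /ptsPN; case: (unlift ord0 i) => [j|]; apply: PN_eta.
    exact: eU_acyc.
  exact: G0_acyc.
move=> c hs hc.
have hl : forall j, c (lift ord0 j) = 0.
  move=> j; have := hc (col j); rewrite big_ord_recl /= /ptsPN unlift_none eta_G0 mulr0 add0r.
  rewrite (bigD1 j) //= liftK eta_eU eqxx mulr1 big1 ?addr0 // => j' hj'.
  rewrite liftK eta_eU; case: eqP => [/(can_inj c1) h|]; last by rewrite mulr0.
  by move: hj'; rewrite h eqxx.
have h0 : c ord0 = 0.
  by move: hs; rewrite big_ord_recl big1 ?addr0 // => j _; apply: hl.
by move=> i; case: (unliftP ord0 i) => [j ->|->].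
Qed.

Lemma not_indep (S : vec R N -> Prop) k : (#|{: Ups N}| < k)%N -> ~ has_aff_indep S k.
Proof.
move=> hk [x [_ hi]].
have [v [[i hv] hsum]] := @dep R (option (Ups N)) k.+1
  (fun i c => if c is Some p then x i p else 1) ltac:(by rewrite card_option ltnS).
have hs : \sum_i v i = 0 by rewrite -[RHS](hsum None); apply: eq_bigr => l _; rewrite mulr1.
have := hi v hs (fun p => hsum (Some p)) i.
by move/eqP: hv.
Qed.

Lemma not_indep_face (o : vec R N) u k p1 : o p1 != 0 -> (#|{: Ups N}| <= k)%N ->
  ~ has_aff_indep (face_of o u) k.
Proof.
move=> ho1 hk [x [hx hi]].
have hcard : (#|{: option {p : Ups N | p != p1}}| < k.+1)%N.
  rewrite card_option card_sig ltnS.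
  have -> : #|[pred p : Ups N | p != p1]| = #|predC1 p1| by [].
  rewrite cardC1; have : (0 < #|{: Ups N}|)%N by apply/card_gt0P; exists p1.
  by move=> h0; rewrite -ltnS (prednK h0) ltnS.
have [v [[i hv] hsum]] := @dep R _ k.+1
  (fun i (c : option {p : Ups N | p != p1}) => if c is Some p then x i (val p) else 1) hcard.
have hsv : \sum_i v i = 0 by rewrite -[RHS](hsum None); apply: eq_bigr => l _; rewrite mulr1.
have hq' : forall q, q != p1 -> \sum_i v i * x i q = 0.
  by move=> q hq; exact: (hsum (Some (exist _ q hq))).
have hp1 : \sum_i v i * x i p1 = 0.
  have e1 : \sum_i v i * dotv o (x i) = 0.
    rewrite (eq_bigr (fun i => v i * u)); last by move=> l _; rewrite (hx l).2.
    by rewrite -mulr_suml hsv mul0r.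
  have e2 : \sum_i v i * dotv o (x i) = \sum_q o q * \sum_i v i * x i q.
    rewrite /dotv; under eq_bigr do rewrite mulr_sumr.
    rewrite exchange_big; apply: eq_bigr => q _; rewrite mulr_sumr.
    by apply: eq_bigr => l _; rewrite mulrA mulrCA mulrA.
  have e3 : \sum_(q | q != p1) o q * \sum_i v i * x i q = 0.
    by apply: big1 => q hq; rewrite (hq' q hq) mulr0.
  rewrite e2 (bigD1 p1) //= e3 addr0 in e1.
  by move/eqP: e1; rewrite mulf_eq0 (negbTE ho1) /= => /eqP.
have hall : forall q, \sum_i v i * x i q = 0.
  by move=> q; case: (eqVneq q p1) => [->|hq] //; apply: hq'.
by move/eqP: hv; apply; apply: hi.
Qed.

Lemma rhs_lhs (hN : (2 <= #|N|)%N) (o : vec R N) u (m : {set N} -> R) :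
  extreme m -> omod m o ->
  (forall H, full_graph H -> u = dotv o (eta R H)) ->
  facet_defining o u /\ tight_at_full o u.
Proof.
move=> hex ho hu.
have hex' := hex; move: hex' => [[hs hsm] [hnz _]].
have huT : u = m setT.
  by rewrite (hu _ (FG_full (fun _ => 0%N))) dotv_eta (full_m hs ho (FG_full _)).
split; last by move=> H hH; rewrite -hu.
split.
  by apply: valid_of => G hG; rewrite dotv_eta huT; exact: valid_m hs hsm ho hG.
have /card_gt0P [a _] : (0 < #|N|)%N by lia.
have /card_gt0P [b hb] : (0 < #|[set~ a]|)%N by rewrite cardsC1; lia.
have hp0 : ([set b] != set0) && (a \notin [set b]).
  apply/andP; split; first by apply/set0Pn; exists b; rewrite in_set1.
  by rewrite in_set1 eq_sym; move: hb; rewrite in_setC1.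
have [d Hd] : exists d, #|{: Ups N}| = d.+1.
  exists #|{: Ups N}|.-1; rewrite prednK //; apply/card_gt0P.
  by exists (exist _ (a, [set b]) hp0 : Ups N).
pose col (j : 'I_d.+1) : Ups N := enum_val (cast_ord (esym Hd) j).
pose coli (p : Ups N) : 'I_d.+1 := cast_ord Hd (enum_rank p).
have c1 : cancel col coli by move=> j; rewrite /col /coli enum_valK cast_ordKV.
have c2 : cancel coli col by move=> p; rewrite /col /coli cast_ordK enum_rankK.
exists d; split; split.
- exact: indepPN c1 c2.
- by apply: not_indep; rewrite Hd.
- have [x [hxT hxi]] := span_lemma c1 c2
    (T := fun G => acyclic G && (dotv o (eta R G) == m setT)) (pert hex ho).
  exists (fun i => eta R (x i)); split.
    move=> i; have /andP [hac /eqP hd] := hxT i.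
    by split; [exact: PN_eta | rewrite huT].
  by move=> c _ hc; exact: hxi.
- have [p1 hp1] : exists p1, o p1 != 0.
    case: (boolP [exists p, o p != 0]) => [/existsP //|/existsPn hall].
    exfalso; apply: hnz => S.
    rewrite -(init_m (b := bS S) hs ho (@bS_init _ S)).
    apply: big1 => x _; rewrite /gof; case: insub => [p|] //=.
    by move/negPn/eqP: (hall p).
  by apply: (not_indep_face (p1 := p1)) => //; rewrite Hd.
Qed.

End RHS.
Section LHS.
Variables (R : realType) (N : finType).

Definition om (m : {set N} -> R) : vec R N :=
  [ffun p : Ups N => m ((val p).1 |: (val p).2) - m (val p).2].

Lemma om_omod (m : {set N} -> R) : omod m (om m).
Proof. by move=> p; rewrite ffunE. Qed.

Lemma valid_sm (m : {set N} -> R) : std_supmod m -> valid_ineq (om m) (m setT).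
Proof.
move=> [hs hsm]; apply: valid_of => G hG; rewrite dotv_eta.
exact: valid_m hs hsm (om_omod m) hG.
Qed.

Lemma dotv_comb k (c : 'I_k -> R) (w : 'I_k -> vec R N) (o : vec R N) :
  (forall p, \sum_i c i * w i p = 0) -> \sum_i c i * dotv o (w i) = 0.
Proof.
move=> h; rewrite /dotv; under eq_bigr do rewrite mulr_sumr.
rewrite exchange_big /=; apply: big1 => p _.
transitivity (o p * \sum_i c i * w i p); last by rewrite h mulr0.
rewrite mulr_sumr; apply: eq_bigr => i _.
by rewrite mulrA mulrCA mulrA.
Qed.

Lemma sum3 d (F : 'I_d.+3 -> R) :
  \sum_i F i = \sum_(j < d.+1) F (widen_ord (leqnSn _) (widen_ord (leqnSn _) j))
    + F (widen_ord (leqnSn _) ord_max) + F ord_max.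
Proof. by rewrite big_ord_recr big_ord_recr. Qed.

Lemma phi_lemma d (x : 'I_d.+1 -> vec R N) (y z : vec R N) (o o1 : vec R N) (u u1 t : R) :
  ~ has_aff_indep (@PN R N) d.+2 ->
  (forall i, PN (x i)) -> PN y -> PN z ->
  (forall c : 'I_d.+1 -> R, \sum_i c i = 0 -> (forall p, \sum_i c i * x i p = 0) ->
     forall i, c i = 0) ->
  (forall i, dotv o (x i) = u) -> (forall i, dotv o1 (x i) = u1) ->
  dotv o y < u -> dotv o1 y - u1 = t * (dotv o y - u) ->
  dotv o1 z - u1 = t * (dotv o z - u).
Proof.
move=> hn hxP hyP hzP hxi hxo hxo1 hyu ht.
apply: NNPP => hne; apply: hn.
pose pts (i : 'I_d.+3) : vec R N :=
  if (i < d.+1)%N then x (inord i) else if (i == d.+1 :> nat) then y else z.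
have p1 : forall j : 'I_d.+1, pts (widen_ord (leqnSn _) (widen_ord (leqnSn _) j)) = x j.
  move=> j; rewrite /pts /= ltn_ord; congr (x _); apply: val_inj; rewrite /= inordK //.
have p2 : pts (widen_ord (leqnSn _) ord_max) = y by rewrite /pts /= ltnn eqxx.
have p3 : pts ord_max = z.
  by rewrite /pts /= ltnNge leqnSn /= (gtn_eqF (ltnSn _)).
exists pts; split.
  move=> i; rewrite /pts; case: ifP => _; first exact: hxP.
  by case: ifP.
move=> c hc0 hc.
set cy := c (widen_ord (leqnSn _) ord_max).
set cz := c ord_max.
pose cx (j : 'I_d.+1) := c (widen_ord (leqnSn _) (widen_ord (leqnSn _) j)).
have S0 : \sum_j cx j + cy + cz = 0 by rewrite -[RHS]hc0 sum3.
have E1 : \sum_j cx j * dotv o (x j) + cy * dotv o y + cz * dotv o z = 0.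
  rewrite -[RHS](dotv_comb o hc) sum3 p2 p3; congr (_ + _ + _).
  by apply: eq_bigr => j _; rewrite p1.
have E2 : \sum_j cx j * dotv o1 (x j) + cy * dotv o1 y + cz * dotv o1 z = 0.
  rewrite -[RHS](dotv_comb o1 hc) sum3 p2 p3; congr (_ + _ + _).
  by apply: eq_bigr => j _; rewrite p1.
have hX : \sum_j cx j = - (cy + cz) by lra.
rewrite (eq_bigr (fun j => cx j * u)) in E1; last by move=> j _; rewrite hxo.
rewrite (eq_bigr (fun j => cx j * u1)) in E2; last by move=> j _; rewrite hxo1.
rewrite -!mulr_suml hX in E1 E2.
set oy := dotv o y in E1 hyu ht; set oz := dotv o z in E1 hne.
set o1y := dotv o1 y in E2 ht; set o1z := dotv o1 z in E2 hne.
have e1 : cz * (o1z - u1) = - (cy * (o1y - u1)) by lra.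
have e2 : cz * (oz - u) = - (cy * (oy - u)) by lra.
have e3 : cz * ((o1z - u1) - t * (oz - u)) = 0.
  have e2' : cz * (t * (oz - u)) = t * (- (cy * (oy - u))) by rewrite mulrCA e2.
  rewrite mulrBr e1 ht e2'; ring.
have hcz : cz = 0.
  move/eqP: e3; rewrite mulf_eq0 => /orP [/eqP //|/eqP h]; exfalso; apply: hne; lra.
have hcy : cy = 0.
  rewrite hcz mul0r in e2.
  have e4 : cy * (oy - u) = 0 by rewrite -[LHS]opprK -e2 oppr0.
  move/eqP: e4; rewrite mulf_eq0 => /orP [/eqP //|/eqP h].
  by move: hyu; rewrite -/oy (subr0_eq h) ltxx.
have hcx : forall j, cx j = 0.
  apply: hxi; first by move: S0; rewrite hcy hcz !addr0.
  move=> p; have := hc p; rewrite sum3 p2 p3 -/cy -/cz hcy hcz !mul0r !addr0 => h.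
  rewrite -[RHS]h.
  by apply: eq_bigr => j _; rewrite p1.
move=> i.
case: (ltngtP i d.+1) => hi.
- have -> : i = widen_ord (leqnSn _) (widen_ord (leqnSn _) (Ordinal hi)) by apply: val_inj.
  exact: hcx.
- have -> : i = ord_max.
    by apply: val_inj => /=; have := ltn_ord i; lia.
  exact: hcz.
- have -> : i = widen_ord (leqnSn _) ord_max by apply: val_inj.
  exact: hcy.
Qed.

End LHS.
Section LHS2.
Variables (R : realType) (N : finType).

Lemma lhs_rhs (o : vec R N) u : facet_defining o u -> tight_at_full o u ->
  exists m : {set N} -> R, extreme m /\ omod m o /\
    (forall H, full_graph H -> u = dotv o (eta R H)).
Proof.
move=> [hval [d [[hPN hPNn] [hF hFn]]]] ht.
set m := mA o.
have hs : standardized m := mA_std o.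
have ho : omod m o := mA_omod ht.
have huT : u = m setT.
  by rewrite -(ht _ (FG_full (fun _ => 0%N))) dotv_eta (full_m hs ho (FG_full _)).
have hsm : supermodular m.
  move=> U V; have := hval _ (PN_eta R (GUV_acyc U V)).
  rewrite dotv_eta (GUV_score _ _ hs ho) huT; lra.
have [y hyP hyu] : exists2 y, PN y & dotv o y < u.
  apply: NNPP => hno; apply: hFn; apply: (aff_mono _ hPN) => z hz; split => //.
  apply/eqP; rewrite eq_le hval //=; rewrite leNgt; apply/negP => hlt.
  by apply: hno; exists z.
exists m; split; last first.
  by split => // H hH; rewrite ht.
split; first by split.
split.
  move=> hz; move: hyu; rewrite huT hz.
  have -> : dotv o y = 0.
    by apply: big1 => p _; rewrite ho !hz subr0 mul0r.
  by rewrite ltxx.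
move=> m1 m2 hm1 hm2 hsplit.
have [hs1 hsm1] := hm1; have [hs2 hsm2] := hm2.
set o1 := om m1; set u1 := m1 setT.
set o2 := om m2; set u2 := m2 setT.
have hv1 : valid_ineq o1 u1 := valid_sm hm1.
have hv2 : valid_ineq o2 u2 := valid_sm hm2.
have hd12 : forall x, dotv o x = dotv o1 x + dotv o2 x.
  move=> x; rewrite /dotv -big_split; apply: eq_bigr => p _.
  by rewrite ho /o1 /o2 !ffunE !hsplit /=; ring.
have hu12 : u = u1 + u2 by rewrite huT hsplit.
have [x [hx hxi]] := hF.
have hx1 : forall i, dotv o1 (x i) = u1.
  move=> i; have [hPx hox] := hx i.
  have := hv1 _ hPx; have := hv2 _ hPx; rewrite hd12 in hox; lra.
have hy1 : dotv o1 y <= u1 := hv1 _ hyP.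
pose t := (u1 - dotv o1 y) / (u - dotv o y).
have hden : u - dotv o y != 0 by rewrite subr_eq0; apply/eqP => e; move: hyu; rewrite e ltxx.
have ht0 : 0 <= t by apply: divr_ge0; lra.
have hty : dotv o1 y - u1 = t * (dotv o y - u).
  rewrite /t -[dotv o y - u]opprB mulrN (divfK hden); ring.
have key : forall z, PN z -> dotv o1 z - u1 = t * (dotv o z - u).
  move=> z hz; apply: (phi_lemma (y := y) hPNn (x := x)) => //.
  - by move=> i; case: (hx i).
  - by move=> i; case: (hx i).
have hd0 : forall o' : vec R N, dotv o' (eta R (G0 N)) = 0.
  by move=> o'; apply: big1 => p _; rewrite eta_G0 mulr0.
have hdp : forall (o' : vec R N) p, dotv o' (eta R (eU p)) = o' p.
  move=> o' p; rewrite /dotv (bigD1 p) //= eta_eU eqxx mulr1 big1 ?addr0 //.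
  by move=> q hq; rewrite eta_eU (negbTE hq) mulr0.
have k0 := key _ (PN_eta R (G0_acyc N)); rewrite !hd0 in k0.
have hop : forall p, o1 p = t * o p.
  move=> p; have := key _ (PN_eta R (eU_acyc p)); rewrite !hdp; lra.
exists t; split => // S.
rewrite -(init_m (b := bS S) hs1 (om_omod m1) (@bS_init _ S)) /m /mA mulr_sumr.
apply: eq_bigr => a _; rewrite /gof; case: insub => [p|] /=; first exact: hop.
by rewrite mulr0.
Qed.

End LHS2.

Unset Implicit Arguments.

Theorem theorem2 (R : realType) (N : finType) (hN : (2 <= #|N|)%N)
    (o : vec R N) (u : R) :
  (facet_defining o u /\ tight_at_full o u) <->
  (exists m : {set N} -> R,
     extreme m /\
     (forall p : Ups N, o p = m ((val p).1 |: (val p).2) - m (val p).2) /\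
     (forall H : graph N, full_graph H -> u = dotv o (eta R H))).
Proof.
split.
  by move=> [hf ht]; apply: lhs_rhs.
by move=> [m [hex [ho hu]]]; apply: (rhs_lhs hN hex ho hu).
Qed.
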